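(* Let $p,q$ be odd primes with $q-p=2$, let $\varepsilon\in\{1,-1\}$, let $D=D_1\cdots D_n$ ($n\ge 0$) be a product of distinct odd primes with $\gcd(pq,D)=1$, and let $E_D/\mathbb{Q}$ be the elliptic curve $y^2=x(x+\varepsilon pD)(x+\varepsilon qD)$. Then: (1) $E_D$ has good supersingular reduction at $3$ if $3\nmid pqD$; (2) $E_D$ has good ordinary reduction at $5$ if $5\nmid pqD$; (3) $E_D$ has good ordinary reduction at $7$ if $7\nmid pqD$ and $p\equiv 1,4\pmod 7$; (4) $E_D$ has good supersingular reduction at $7$ if $7\nmid pqD$ and $p\equiv 2,3,6\pmod 7$. *)

(* Defs.v *)
From HB Require Import structures.
From mathcomp Require Import all_boot all_order all_algebra.
Set Implicit Arguments. Unset Strict Implicit. Unset Printing Implicit Defensive.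
Import Order.TTheory GRing.Theory Num.Theory.
Local Open Scope ring_scope.

Record wmodel := WModel { wa1 : int; wa2 : int; wa3 : int; wa4 : int; wa6 : int }.

(* Discriminant (Silverman III.1). *)
Definition wdisc (E : wmodel) : int :=
  let a1 := wa1 E in let a2 := wa2 E in let a3 := wa3 E in
  let a4 := wa4 E in let a6 := wa6 E in
  let b2 := a1 ^+ 2 + 4 * a2 in
  let b4 := 2 * a4 + a1 * a3 in
  let b6 := a3 ^+ 2 + 4 * a6 in
  let b8 := a1 ^+ 2 * a6 + 4 * a2 * a6 - a1 * a3 * a4 + a2 * a3 ^+ 2 - a4 ^+ 2 in
  - b2 ^+ 2 * b8 - 8 * b4 ^+ 3 - 27 * b6 ^+ 2 + 9 * b2 * b4 * b6.

(* E' is obtained from E by an admissible change of variables over Q: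
   x = u^2 x' + r, y = u^3 y' + s u^2 x' + t, u <> 0 (Silverman Table 3.1). *)
Definition wiso (E E' : wmodel) : Prop :=
  let a1 : rat := (wa1 E)%:~R in let a2 : rat := (wa2 E)%:~R in
  let a3 : rat := (wa3 E)%:~R in let a4 : rat := (wa4 E)%:~R in
  let a6 : rat := (wa6 E)%:~R in
  let a1' : rat := (wa1 E')%:~R in let a2' : rat := (wa2 E')%:~R in
  let a3' : rat := (wa3 E')%:~R in let a4' : rat := (wa4 E')%:~R in
  let a6' : rat := (wa6 E')%:~R in
  exists u r s t : rat, u != 0 /\
    u * a1' = a1 + 2 * s /\
    u ^+ 2 * a2' = a2 - s * a1 + 3 * r - s ^+ 2 /\
    u ^+ 3 * a3' = a3 + r * a1 + 2 * t /\
    u ^+ 4 * a4' = a4 - s * a3 + 2 * r * a2 - (t + r * s) * a1 + 3 * r ^+ 2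
                   - 2 * s * t /\
    u ^+ 6 * a6' = a6 + r * a4 + r ^+ 2 * a2 + r ^+ 3 - t * a3 - t ^+ 2
                   - r * t * a1.

Definition good_model_at (l : nat) (E : wmodel) : Prop :=
  ~~ (l%:Z %| wdisc E)%Z.

Definition weq (E : wmodel) (x y : int) : int :=
  y ^+ 2 + wa1 E * x * y + wa3 E * y
  - (x ^+ 3 + wa2 E * x ^+ 2 + wa4 E * x + wa6 E).

(* Number of F_l-points of the reduction of E mod l (affine points plus the
   point at infinity). *)
Definition npoints (l : nat) (E : wmodel) : nat :=
  #|[set P : 'I_l * 'I_l | (l%:Z %| weq E (P.1 : nat)%:Z (P.2 : nat)%:Z)%Z]|.+1.

Definition trace_frob (l : nat) (E : wmodel) : int :=
  l%:Z + 1 - (npoints l E)%:Z.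

(* E/Q has good reduction at l, and the reduced curve is supersingular
   (resp. ordinary), i.e. l | a_l (resp. l does not divide a_l), computed on a
   Q-isomorphic integral model with l-unit discriminant. *)
Definition good_supersingular_at (l : nat) (E : wmodel) : Prop :=
  exists E', wiso E E' /\ good_model_at l E' /\ (l%:Z %| trace_frob l E')%Z.

Definition good_ordinary_at (l : nat) (E : wmodel) : Prop :=
  exists E', wiso E E' /\ good_model_at l E' /\ ~~ (l%:Z %| trace_frob l E')%Z.

(* E_D : y^2 = x (x + eps p D)(x + eps q D), expanded. *)
Definition E_D (eps : int) (p q D : nat) : wmodel :=
  WModel 0 (eps * (p%:Z + q%:Z) * D%:Z) 0
         (eps ^+ 2 * p%:Z * q%:Z * D%:Z ^+ 2) 0.

(* Main.v *)
Require Import Defs.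
From HB Require Import structures.
From mathcomp Require Import all_boot all_order all_algebra.
From mathcomp Require Import ring.
Import Order.TTheory GRing.Theory Num.Theory.
Local Open Scope ring_scope.

Definition npts (l : nat) (E : wmodel) : nat :=
  (\sum_(0 <= i < l) \sum_(0 <= j < l) ((l%:Z %| weq E i%:Z j%:Z)%Z : nat))%N.
Lemma nptsE l E : npoints l E = (npts l E).+1.
Proof.
rewrite /npoints /npts cardsE -sum1_card big_mkcond /=.
rewrite big_mkord -(pair_bigA _ (fun (i j : 'I_l) => if (l%:Z %| weq E (i:nat)%:Z (j:nat)%:Z)%Z then 1 else 0))%N.
congr _.+1; apply: eq_bigr => i _; rewrite big_mkord; apply: eq_bigr => j _.
by case: ifP.
Qed.

Section Eqm.
Variable l : nat.
Definition eqm (a b : int) := (l%:Z %| a - b)%Z.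
Lemma eqm_refl a : eqm a a. Proof. by rewrite /eqm subrr dvdz0. Qed.
Lemma eqmD a b c d : eqm a b -> eqm c d -> eqm (a + c) (b + d).
Proof. rewrite /eqm => h1 h2; have -> : a + c - (b + d) = (a - b) + (c - d) by ring. by apply: rpredD. Qed.
Lemma eqmN a b : eqm a b -> eqm (- a) (- b).
Proof. by move=> h; rewrite /eqm -opprD rpredN. Qed.
Lemma eqmM a b c d : eqm a b -> eqm c d -> eqm (a * c) (b * d).
Proof.
rewrite /eqm => h1 h2; have -> : a * c - (b * d) = (a - b) * c + b * (c - d) by ring.
by apply: rpredD; [apply: dvdz_mulr | apply: dvdz_mull].
Qed.
Lemma eqmX a b n : eqm a b -> eqm (a ^+ n) (b ^+ n).
Proof. move=> h; elim: n => [|n IH]; first exact: eqm_refl. by rewrite !exprS; apply: eqmM. Qed.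
Lemma eqm_dvd a b : eqm a b -> (l%:Z %| a)%Z = (l%:Z %| b)%Z.
Proof.
rewrite /eqm => h; apply/idP/idP => H.
  have -> : b = a - (a - b) by ring. by apply: rpredD => //; rewrite rpredN.
have -> : a = (a - b) + b by ring. exact: rpredD.
Qed.
End Eqm.

Ltac eqm_tac := repeat match goal with
  | |- is_true (eqm _ ?x ?y) => constr_eq x y; apply: eqm_refl
  | H : is_true (eqm _ ?x ?y) |- is_true (eqm _ ?x' ?y') => constr_eq x x'; constr_eq y y'; exact H
  | |- is_true (eqm _ (_ + _) (_ + _) ) => apply: eqmD
  | |- is_true (eqm _ (- _) (- _) ) => apply: eqmN
  | |- is_true (eqm _ (_ * _) (_ * _) ) => apply: eqmM
  | |- is_true (eqm _ (_ ^+ _) (_ ^+ _) ) => apply: eqmX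
  end.

Lemma wdisc_eqm l a b a' b' : eqm l a a' -> eqm l b b' ->
  eqm l (wdisc (WModel 0 a 0 b 0)) (wdisc (WModel 0 a' 0 b' 0)).
Proof. move=> h1 h2; rewrite /wdisc /=. eqm_tac. Qed.

Lemma weq_eqm l a b a' b' x y : eqm l a a' -> eqm l b b' ->
  eqm l (weq (WModel 0 a 0 b 0) x y) (weq (WModel 0 a' 0 b' 0) x y).
Proof. move=> h1 h2; rewrite /weq /=. eqm_tac. Qed.

Definition Ered (l : nat) (eps : int) (pr dr : nat) :=
  WModel 0 ((eps * (pr%:Z + (pr + 2)%N%:Z) * dr%:Z) %% l%:Z)%Z 0
    ((eps ^+ 2 * pr%:Z * (pr + 2)%N%:Z * dr%:Z ^+ 2) %% l%:Z)%Z 0.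

Definition chk (l : nat) (c : nat -> bool) (want : bool) : bool :=
  all (fun pr => all (fun dr => all (fun eps : int =>
    (c pr && ~~ (l %| pr * (pr + 2) * dr)%N) ==>
    (~~ (l%:Z %| wdisc (Ered l eps pr dr))%Z &&
     ((l%:Z %| l%:Z + 1 - (npts l (Ered l eps pr dr)).+1%:Z)%Z == want)))
    [:: 1; -1]) (iota 0 l)) (iota 0 l).

Lemma chk3 : chk 3 (fun _ => true) true. Proof. rewrite /chk /npts unlock. by vm_compute. Qed.
Lemma chk5 : chk 5 (fun _ => true) false. Proof. rewrite /chk /npts unlock. by vm_compute. Qed.
Lemma chk7a : chk 7 (fun pr => (pr == 1) || (pr == 4))%N false. Proof. rewrite /chk /npts unlock. by vm_compute. Qed.
Lemma chk7b : chk 7 (fun pr => [|| pr == 2, pr == 3 | pr == 6])%N true. Proof. rewrite /chk /npts unlock. by vm_compute. Qed.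

Lemma eqm_trans l a b c : eqm l a b -> eqm l b c -> eqm l a c.
Proof. rewrite /eqm => h1 h2; have -> : a - c = (a - b) + (b - c) by ring. exact: rpredD. Qed.
Lemma eqm_mod l a : eqm l a (a %% l%:Z)%Z.
Proof. by rewrite /eqm {1}(divz_eq a l%:Z) addrK dvdz_mull // dvdzz. Qed.
Lemma eqm_nat l n : eqm l n%:Z (n %% l)%N%:Z.
Proof. by rewrite /eqm {1}(divn_eq n l) PoszD PoszM addrK dvdz_mull // dvdzz. Qed.

Lemma wiso_refl E : wiso E E.
Proof.
rewrite /wiso; exists 1, 0, 0, 0; split; first by rewrite oner_eq0.
by do !split; ring.
Qed.

Lemma main_l l c want p D (eps : int) : (0 < l)%N -> (eps = 1 \/ eps = -1) -> chk l c want ->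
  ~~ (l %| p * (p + 2) * D)%N -> c (p %% l)%N ->
  exists E', wiso (E_D eps p (p + 2) D) E' /\ good_model_at l E' /\
    ((l%:Z %| trace_frob l E')%Z = want).
Proof.
move=> l0 heps hchk hnd hc.
exists (E_D eps p (p + 2) D); split; first exact: wiso_refl.
have hpr := eqm_nat l p; have hdr := eqm_nat l D.
have hq : eqm l (p + 2)%N%:Z ((p %% l) + 2)%N%:Z.
  by rewrite !PoszD; eqm_tac.
set pr := (p %% l)%N in hpr hq hc; set dr := (D %% l)%N in hdr.
have ha : eqm l (eps * (p%:Z + (p + 2)%N%:Z) * D%:Z)
   ((eps * (pr%:Z + (pr + 2)%N%:Z) * dr%:Z) %% l%:Z)%Z.
  by apply: eqm_trans (eqm_mod _ _); eqm_tac.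
have hb : eqm l (eps ^+ 2 * p%:Z * (p + 2)%N%:Z * D%:Z ^+ 2)
   ((eps ^+ 2 * pr%:Z * (pr + 2)%N%:Z * dr%:Z ^+ 2) %% l%:Z)%Z.
  by apply: eqm_trans (eqm_mod _ _); eqm_tac.
have hnd' : ~~ (l %| pr * (pr + 2) * dr)%N.
  move: hnd; have -> : (l %| p * (p + 2) * D)%N = (l%:Z %| (p * (p + 2) * D)%N%:Z)%Z by [].
  have -> : (l %| pr * (pr + 2) * dr)%N = (l%:Z %| (pr * (pr + 2) * dr)%N%:Z)%Z by [].
  rewrite (@eqm_dvd l _ (pr * (pr + 2) * dr)%N%:Z) //.
  by rewrite !PoszM; eqm_tac.
move/allP: hchk => /(_ pr); rewrite mem_iota add0n ltn_pmod // => /(_ isT).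
move/allP => /(_ dr); rewrite mem_iota add0n ltn_pmod // => /(_ isT).
move/allP => /(_ eps); rewrite (_ : eps \in [:: 1; -1]); last by case: heps => ->.
move=> /(_ isT); rewrite hc hnd' /= => /andP [hd ht].
rewrite /E_D; rewrite /Ered in hd ht.
split.
  by rewrite /good_model_at (eqm_dvd _ _ _ (wdisc_eqm _ _ _ _ _ ha hb)).
rewrite /trace_frob !nptsE -(eqP ht); congr (_ %| _)%Z; congr (_ - Posz _.+1).
rewrite /npts; apply: eq_bigr => i _; apply: eq_bigr => j _.
by rewrite (eqm_dvd _ _ _ (weq_eqm _ _ _ _ _ _ _ ha hb)).
Qed.

Theorem corollary2p2 (p q : nat) (eps : int) (Ds : seq nat) :
  prime p -> odd p -> prime q -> odd q -> (q = p + 2)%N ->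
  (eps = 1 \/ eps = -1) ->
  uniq Ds -> all (fun d => prime d && odd d) Ds ->
  coprime (p * q) (\prod_(d <- Ds) d) ->
  let D := (\prod_(d <- Ds) d)%N in
  let E := E_D eps p q D in
  [/\ (~~ (3 %| p * q * D)%N -> good_supersingular_at 3 E),
      (~~ (5 %| p * q * D)%N -> good_ordinary_at 5 E),
      (~~ (7 %| p * q * D)%N -> ((p %% 7 == 1) || (p %% 7 == 4))%N ->
         good_ordinary_at 7 E) &
      (~~ (7 %| p * q * D)%N -> [|| p %% 7 == 2, p %% 7 == 3 | p %% 7 == 6]%N ->
         good_supersingular_at 7 E)].
Proof.
move=> _ _ _ _ -> heps _ _ _ D E; split.
- move=> h; have [E' [h1 [h2 h3]]] := main_l 3 (fun _ => true) true p D eps isT heps chk3 h isT.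
  by exists E'; rewrite h3.
- move=> h; have [E' [h1 [h2 h3]]] := main_l 5 (fun _ => true) false p D eps isT heps chk5 h isT.
  by exists E'; rewrite h3.
- move=> h hc; have [E' [h1 [h2 h3]]] := main_l 7 _ false p D eps isT heps chk7a h hc.
  by exists E'; rewrite h3.
- move=> h hc; have [E' [h1 [h2 h3]]] := main_l 7 _ true p D eps isT heps chk7b h hc.
  by exists E'; rewrite h3.
Qed.
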